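(* There is a unique Lie algebra morphism $\rho_{\mathfrak g}:\bar{\mathfrak t}_{1,n}\to\mathcal H_n(\mathfrak g)$ such that $\bar x_i\mapsto\sum_\alpha \mathrm x_\alpha\otimes e_\alpha^{(i)}$, $\bar y_i\mapsto-\sum_\alpha\partial_\alpha\otimes e_\alpha^{(i)}$, $\bar t_{ij}\mapsto 1\otimes t_{\mathfrak g}^{(ij)}$ (classes in $\mathcal H_n(\mathfrak g)$).
   Context: $\mathfrak g$ is a finite-dimensional complex Lie algebra with nondegenerate invariant symmetric tensor $t_{\mathfrak g}\in S^2(\mathfrak g)^{\mathfrak g}$, inducing an invariant nondegenerate symmetric pairing $\langle\,,\rangle$; $(e_\alpha)$ is a basis with $t_{\mathfrak g}=\sum_\alpha e_\alpha\otimes e_\alpha$. $D(\mathfrak g)$ is the algebra generated by $\mathrm x_a,\partial_a$ ($a\in\mathfrak g$), linear in $a$, with $[\mathrm x_a,\mathrm x_b]=[\partial_a,\partial_b]=0$, $[\partial_a,\mathrm x_b]=\langle a,b\rangle$; $\mathrm x_\alpha=\mathrm x_{e_\alpha}$, $\partial_\alpha=\partial_{e_\alpha}$. $X_a=\sum_\alpha\mathrm x_{[a,e_\alpha]}\partial_{e_\alpha}$. $A_n=D(\mathfrak g)\otimes U(\mathfrak g)^{\otimes n}$, $Y_a=X_a\otimes1+1\otimes\sum_{i=1}^na^{(i)}$ (where $u^{(i)}$ is $u$ in the $i$-th factor), $\mathfrak g^{\mathrm{diag}}=\{Y_a\}$, and $\mathcal H_n(\mathfrak g)=\{x\in A_n:Y_ax\in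 A_n\mathfrak g^{\mathrm{diag}}\ \forall a\}/A_n\mathfrak g^{\mathrm{diag}}$ (Hecke algebra). $t_{\mathfrak g}^{(ij)}=\sum_\alpha e_\alpha^{(i)}e_\alpha^{(j)}$. $\bar{\mathfrak t}_{1,n}=\mathfrak t_{1,n}/(\sum x_i,\sum y_i)$ where $\mathfrak t_{1,n}$ has generators $x_i,y_i,t_{ij}$ and relations $t_{ij}=t_{ji}$, $[t_{ij},t_{ik}+t_{jk}]=0$, $[t_{ij},t_{kl}]=0$, $[x_i,y_j]=t_{ij}$ ($i\ne j$), $[x_i,x_j]=[y_i,y_j]=0$, $[x_i,y_i]=-\sum_{j\ne i}t_{ij}$, $[x_i,t_{jk}]=[y_i,t_{jk}]=0$, $[x_i+x_j,t_{ij}]=[y_i+y_j,t_{ij}]=0$ ($i,j,k,l$ distinct). *)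

(* Defs.v *)
From mathcomp Require Import all_boot all_order all_algebra.
Set Implicit Arguments.
Unset Strict Implicit.
Unset Printing Implicit Defensive.
Import Order.TTheory GRing.Theory Num.Theory.
Local Open Scope ring_scope.

(* The quadratic Lie algebra g: dimension d, basis (e_a)_{a < d} with        *)
(* t_g = sum_a e_a (x) e_a, hence <e_a, e_b> = delta_ab.  Bracket given by   *)
(* structure constants: [e_a, e_b] = sum_k c a b k e_k.                      *)
Definition quadratic_lie (F : fieldType) (d : nat) (c : 'I_d -> 'I_d -> 'I_d -> F) : Prop :=
  [/\
      forall a b k, c a b k = - c b a k,
      forall a b e k,
        \sum_(m < d) (c a b m * c m e k + c b e m * c m a k + c e a m * c m b k) = 0
    & (* invariance of the pairing: <[a,b],e> = <a,[b,e]> *)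
      forall a b e, c a b e = c b e a].

(* A_n = D(g) (x) U(g)^{(x) n}, presented by generators and relations.       *)
Inductive agen (d n : nat) : Type :=
  | GX of 'I_d            (* x_alpha (x) 1 *)
  | GD of 'I_d            (* d_alpha (x) 1 *)
  | GE of 'I_n & 'I_d.    (* 1 (x) e_alpha^(i) *)
Arguments GX {d n}. Arguments GD {d n}. Arguments GE {d n}.

Inductive aterm (F : fieldType) (d n : nat) : Type :=
  | AVar of agen d n
  | AConst of F
  | AAdd of aterm F d n & aterm F d n
  | AMul of aterm F d n & aterm F d n.
Arguments AVar {F d n}. Arguments AConst {F d n}.
Arguments AAdd {F d n}. Arguments AMul {F d n}.

Section Alg.
Variables (F : fieldType) (d n : nat) (c : 'I_d -> 'I_d -> 'I_d -> F).

Local Notation T := (aterm F d n).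
Definition asum (s : seq T) : T := foldr (@AAdd F d n) (@AConst F d n 0) s.
Definition ascale (k : F) (t : T) : T := AMul (@AConst F d n k) t.
Definition asub (t u : T) : T := AAdd t (ascale (-1) u).
Definition aX (a : 'I_d) : T := AVar (GX a).
Definition aD (a : 'I_d) : T := AVar (GD a).
Definition aE (i : 'I_n) (a : 'I_d) : T := AVar (GE i a).

Inductive arel : T -> T -> Prop :=
  | arel_xx a b : arel (AMul (aX a) (aX b)) (AMul (aX b) (aX a))
  | arel_dd a b : arel (AMul (aD a) (aD b)) (AMul (aD b) (aD a))
  | arel_dx a b : arel (AMul (aD a) (aX b))
                       (AAdd (AMul (aX b) (aD a)) (@AConst F d n (if a == b then 1 else 0)))
  | arel_ee i a b : arel (AMul (aE i a) (aE i b))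
                         (AAdd (AMul (aE i b) (aE i a))
                               (asum [seq ascale (c a b k) (aE i k) | k <- enum 'I_d]))
  | arel_ee' i j a b : i != j -> arel (AMul (aE i a) (aE j b)) (AMul (aE j b) (aE i a))
  | arel_xe a i b : arel (AMul (aX a) (aE i b)) (AMul (aE i b) (aX a))
  | arel_de a i b : arel (AMul (aD a) (aE i b)) (AMul (aE i b) (aD a)).

Inductive aeq : T -> T -> Prop :=
  | aeq_refl t : aeq t t
  | aeq_sym t u : aeq t u -> aeq u t
  | aeq_trans t u v : aeq t u -> aeq u v -> aeq t v
  | aeq_add t t' u u' : aeq t t' -> aeq u u' -> aeq (AAdd t u) (AAdd t' u')
  | aeq_mul t t' u u' : aeq t t' -> aeq u u' -> aeq (AMul t u) (AMul t' u')
  | aeq_addA t u v : aeq (AAdd (AAdd t u) v) (AAdd t (AAdd u v))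
  | aeq_addC t u : aeq (AAdd t u) (AAdd u t)
  | aeq_add0 t : aeq (AAdd t (@AConst F d n 0)) t
  | aeq_addN t : aeq (AAdd t (ascale (-1) t)) (@AConst F d n 0)
  | aeq_mulA t u v : aeq (AMul (AMul t u) v) (AMul t (AMul u v))
  | aeq_mul1l t : aeq (AMul (@AConst F d n 1) t) t
  | aeq_mul1r t : aeq (AMul t (@AConst F d n 1)) t
  | aeq_mulDl t u v : aeq (AMul (AAdd t u) v) (AAdd (AMul t v) (AMul u v))
  | aeq_mulDr t u v : aeq (AMul t (AAdd u v)) (AAdd (AMul t u) (AMul t v))
  | aeq_constD k l : aeq (AAdd (@AConst F d n k) (@AConst F d n l)) (@AConst F d n (k + l))
  | aeq_constM k l : aeq (AMul (@AConst F d n k) (@AConst F d n l)) (@AConst F d n (k * l))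
  | aeq_constC k t : aeq (AMul (@AConst F d n k) t) (AMul t (@AConst F d n k))
  | aeq_rel t u : arel t u -> aeq t u.

(* X_{e_b} = sum_alpha x_{[e_b, e_alpha]} d_alpha,
   [e_b, e_alpha] = sum_gamma c b alpha gamma e_gamma *)
Definition aXop (b : 'I_d) : T :=
  asum [seq AMul (ascale (c b al ga) (aX ga)) (aD al) | al <- enum 'I_d, ga <- enum 'I_d].

(* Y_{e_b} = X_{e_b} (x) 1 + 1 (x) sum_i e_b^(i) *)
Definition aY (b : 'I_d) : T := AAdd (aXop b) (asum [seq aE i b | i <- enum 'I_n]).

(* membership in the left ideal A_n g^diag *)
Definition inI (t : T) : Prop :=
  exists s : seq (T * 'I_d), aeq t (asum [seq AMul p.1 (aY p.2) | p <- s]).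

(* x with Y_a x in A_n g^diag for all a (it suffices for basis elements,
   by linearity of a |-> Y_a) *)
Definition inN (t : T) : Prop := forall b, inI (AMul (aY b) t).

(* equality of classes in H_n(g) *)
Definition heq (t u : T) : Prop := inI (asub t u).

End Alg.
Arguments asum {F d n}. Arguments ascale {F d n}. Arguments asub {F d n}.
Arguments aX {F d n}. Arguments aD {F d n}. Arguments aE {F d n}.
Arguments aeq {F d n}. Arguments arel {F d n}. Arguments aXop {F d n}.
Arguments aY {F d n}. Arguments inI {F d n}. Arguments inN {F d n}.
Arguments heq {F d n}.

(* bar t_{1,n}: Lie algebra presented by generators and relations.          *)
Inductive lgen (n : nat) : Type :=
  | LX of 'I_n | LY of 'I_n | LT of 'I_n & 'I_n.

Inductive lterm (F : fieldType) (n : nat) : Type :=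
  | LV of lgen n
  | L0
  | LAdd of lterm F n & lterm F n
  | LSc of F & lterm F n
  | LBr of lterm F n & lterm F n.
Arguments LV {F n}. Arguments L0 {F n}. Arguments LAdd {F n}.
Arguments LSc {F n}. Arguments LBr {F n}.
Arguments LX {n}. Arguments LY {n}. Arguments LT {n}.

Section Lie.
Variables (F : fieldType) (n : nat).
Local Notation L := (lterm F n).
Definition lsum (s : seq L) : L := foldr (@LAdd F n) (@L0 F n) s.
Definition lx i : L := LV (LX i).
Definition ly i : L := LV (LY i).
Definition lt i j : L := LV (LT i j).
Definition lz : L := @L0 F n.

(* The generators t_ii (i.e. i = j) are not part of the paper's presentation;
   they are included as extra generators and killed by lrel_tii. *)
Inductive lrel : L -> L -> Prop :=
  | lrel_tii i : lrel (lt i i) lz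
  | lrel_tsym i j : i != j -> lrel (lt i j) (lt j i)
  | lrel_t4T i j k : [&& i != j, i != k & j != k] ->
      lrel (LBr (lt i j) (LAdd (lt i k) (lt j k))) lz
  | lrel_tt i j k l : uniq [:: i; j; k; l] -> lrel (LBr (lt i j) (lt k l)) lz
  | lrel_xy i j : i != j -> lrel (LBr (lx i) (ly j)) (lt i j)
  | lrel_xx i j : lrel (LBr (lx i) (lx j)) lz
  | lrel_yy i j : lrel (LBr (ly i) (ly j)) lz
  | lrel_xyii i : lrel (LBr (lx i) (ly i))
                       (LSc (-1) (lsum [seq lt i j | j <- enum 'I_n & j != i]))
  | lrel_xt i j k : [&& i != j, i != k & j != k] -> lrel (LBr (lx i) (lt j k)) lz
  | lrel_yt i j k : [&& i != j, i != k & j != k] -> lrel (LBr (ly i) (lt j k)) lz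
  | lrel_xxt i j : i != j -> lrel (LBr (LAdd (lx i) (lx j)) (lt i j)) lz
  | lrel_yyt i j : i != j -> lrel (LBr (LAdd (ly i) (ly j)) (lt i j)) lz
  | lrel_sumx : lrel (lsum [seq lx i | i <- enum 'I_n]) lz
  | lrel_sumy : lrel (lsum [seq ly i | i <- enum 'I_n]) lz.

Inductive leq : L -> L -> Prop :=
  | leq_refl u : leq u u
  | leq_sym u v : leq u v -> leq v u
  | leq_trans u v w : leq u v -> leq v w -> leq u w
  | leq_add u u' v v' : leq u u' -> leq v v' -> leq (LAdd u v) (LAdd u' v')
  | leq_sc k u u' : leq u u' -> leq (LSc k u) (LSc k u')
  | leq_br u u' v v' : leq u u' -> leq v v' -> leq (LBr u v) (LBr u' v')
  | leq_addA u v w : leq (LAdd (LAdd u v) w) (LAdd u (LAdd v w))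
  | leq_addC u v : leq (LAdd u v) (LAdd v u)
  | leq_add0 u : leq (LAdd u lz) u
  | leq_addN u : leq (LAdd u (LSc (-1) u)) lz
  | leq_sc1 u : leq (LSc 1 u) u
  | leq_scA k l u : leq (LSc k (LSc l u)) (LSc (k * l) u)
  | leq_scDl k l u : leq (LSc (k + l) u) (LAdd (LSc k u) (LSc l u))
  | leq_scDr k u v : leq (LSc k (LAdd u v)) (LAdd (LSc k u) (LSc k v))
  | leq_brDl u v w : leq (LBr (LAdd u v) w) (LAdd (LBr u w) (LBr v w))
  | leq_brDr u v w : leq (LBr u (LAdd v w)) (LAdd (LBr u v) (LBr u w))
  | leq_brZl k u v : leq (LBr (LSc k u) v) (LSc k (LBr u v))
  | leq_brZr k u v : leq (LBr u (LSc k v)) (LSc k (LBr u v))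
  | leq_brxx u : leq (LBr u u) lz
  | leq_jacobi u v w :
      leq (LAdd (LBr u (LBr v w)) (LAdd (LBr v (LBr w u)) (LBr w (LBr u v)))) lz
  | leq_rel u v : lrel u v -> leq u v.
End Lie.
Arguments lsum {F n}. Arguments lx {F n}. Arguments ly {F n}.
Arguments lt {F n}. Arguments lz {F n}. Arguments lrel {F n}. Arguments leq {F n}.

(* f : lterm -> aterm represents a Lie algebra morphism                      *)
Definition is_rho (F : fieldType) (d n : nat) (c : 'I_d -> 'I_d -> 'I_d -> F)
    (f : lterm F n -> aterm F d n) : Prop :=
  [/\
      forall u, inN c (f u),
      forall u v, leq u v -> heq c (f u) (f v),
      (forall u v, heq c (f (LAdd u v)) (AAdd (f u) (f v))) /\
      (forall k u, heq c (f (LSc k u)) (ascale k (f u))),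
      forall u v, heq c (f (LBr u v)) (asub (AMul (f u) (f v)) (AMul (f v) (f u)))
    &
      [/\ forall i, heq c (f (lx i))
                      (asum [seq AMul (aX al) (aE i al) | al <- enum 'I_d]),
          forall i, heq c (f (ly i))
                      (ascale (-1) (asum [seq AMul (aD al) (aE i al) | al <- enum 'I_d]))
        & forall i j, i != j -> heq c (f (lt i j))
                      (asum [seq AMul (aE i al) (aE j al) | al <- enum 'I_d])]].

(* Main.v *)
Require Import Defs.
From HB Require Import structures.
From mathcomp Require Import all_boot all_order all_algebra.
From mathcomp Require Import boolp.
Set Implicit Arguments.
Unset Strict Implicit.
Unset Printing Implicit Defensive.
Import Order.TTheory GRing.Theory Num.Theory.
Local Open Scope ring_scope.



Section Quot.
Variables (F : fieldType) (d n : nat) (c : 'I_d -> 'I_d -> 'I_d -> F).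
Local Notation T := (aterm F d n).
Local Notation ae := (@aeq F d n c).

Record Qt := MkQ { qc : T -> Prop ; qcP : exists t, qc = ae t }.

Lemma Qext (q1 q2 : Qt) : qc q1 = qc q2 -> q1 = q2.
Proof.
case: q1 q2 => [c1 p1] [c2 p2] /= E; subst c2.
by rewrite (Prop_irrelevance p1 p2).
Qed.

Definition cl (t : T) : Qt := @MkQ (ae t) (ex_intro _ t erefl).

Lemma cl_eq t u : ae t u -> cl t = cl u.
Proof.
move=> h; apply: Qext => /=; apply: funext => x; apply: propext; split => hx.
  exact: aeq_trans (aeq_sym h) hx.
exact: aeq_trans h hx.
Qed.

Lemma eq_cl t u : cl t = cl u -> ae t u.
Proof.
move=> /(congr1 qc) /= E.
have : ae u u by apply: aeq_refl.
by rewrite -E.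
Qed.

Definition rep (q : Qt) : T := proj1_sig (cid (qcP q)).
Lemma repK q : cl (rep q) = q.
Proof.
rewrite /rep; case: (cid _) => t /= E; apply: Qext => /=; by rewrite E.
Qed.

Lemma clrep t : ae (rep (cl t)) t.
Proof. by apply: eq_cl; rewrite repK. Qed.

Lemma Qind (P : Qt -> Prop) : (forall t, P (cl t)) -> forall q, P q.
Proof. by move=> h q; rewrite -(repK q). Qed.

HB.instance Definition _ := gen_eqMixin Qt.
HB.instance Definition _ := gen_choiceMixin Qt.

Definition q0 : Qt := cl (AConst 0).
Definition q1 : Qt := cl (AConst 1).
Definition qadd (a b : Qt) := locked cl (AAdd (rep a) (rep b)).
Definition qmul (a b : Qt) := locked cl (AMul (rep a) (rep b)).
Definition qopp (a : Qt) := locked cl (ascale (-1) (rep a)).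
Definition qsc (k : F) (a : Qt) := locked cl (ascale k (rep a)).

Lemma qaddE t u : qadd (cl t) (cl u) = cl (AAdd t u).
Proof. by rewrite /qadd -lock; apply: cl_eq; apply: aeq_add; apply: clrep. Qed.
Lemma qmulE t u : qmul (cl t) (cl u) = cl (AMul t u).
Proof. by rewrite /qmul -lock; apply: cl_eq; apply: aeq_mul; apply: clrep. Qed.
Lemma qoppE t : qopp (cl t) = cl (ascale (-1) t).
Proof. by rewrite /qopp -lock; apply: cl_eq; apply: aeq_mul; [apply: aeq_refl|apply: clrep]. Qed.
Lemma qscE k t : qsc k (cl t) = cl (ascale k t).
Proof. by rewrite /qsc -lock; apply: cl_eq; apply: aeq_mul; [apply: aeq_refl|apply: clrep]. Qed.

Ltac qelim := repeat (let q := fresh "w" in elim/Qind => q);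
  rewrite ?qaddE ?qmulE ?qoppE ?qscE /q0 /q1 ?qaddE ?qmulE ?qoppE ?qscE.

Lemma qaddA : associative qadd.
Proof. qelim; apply: cl_eq; apply: aeq_sym; exact: aeq_addA. Qed.
Lemma qaddC : commutative qadd.
Proof. qelim; apply: cl_eq; exact: aeq_addC. Qed.
Lemma qadd0r : left_id q0 qadd.
Proof. qelim; apply: cl_eq; apply: aeq_trans; [apply: aeq_addC|apply: aeq_add0]. Qed.
Lemma qaddNr : left_inverse q0 qopp qadd.
Proof. qelim; apply: cl_eq; apply: aeq_trans; [apply: aeq_addC|apply: aeq_addN]. Qed.
Lemma qmulA : associative qmul.
Proof. qelim; apply: cl_eq; apply: aeq_sym; exact: aeq_mulA. Qed.
Lemma qmul1r : left_id q1 qmul.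
Proof. qelim; apply: cl_eq; exact: aeq_mul1l. Qed.
Lemma qmulr1 : right_id q1 qmul.
Proof. qelim; apply: cl_eq; exact: aeq_mul1r. Qed.
Lemma qmulDl : left_distributive qmul qadd.
Proof. qelim; apply: cl_eq; exact: aeq_mulDl. Qed.
Lemma qmulDr : right_distributive qmul qadd.
Proof. qelim; apply: cl_eq; exact: aeq_mulDr. Qed.

HB.instance Definition _ := GRing.isPzRing.Build Qt
  qaddA qaddC qadd0r qaddNr qmulA qmul1r qmulr1 qmulDl qmulDr.

Lemma clD t u : cl t + cl u = cl (AAdd t u). Proof. exact: qaddE. Qed.
Lemma clM t u : cl t * cl u = cl (AMul t u). Proof. exact: qmulE. Qed.
Lemma clN t : - cl t = cl (ascale (-1) t). Proof. exact: qoppE. Qed.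
Lemma cl0 : cl (AConst 0) = 0. Proof. by []. Qed.
Lemma cl1 : cl (AConst 1) = 1. Proof. by []. Qed.

Lemma qscA k l v : qsc k (qsc l v) = qsc (k * l) v.
Proof.
move: v; qelim; apply: cl_eq; apply: aeq_trans; [apply: aeq_sym; apply: aeq_mulA|].
by apply: aeq_mul; [apply: aeq_constM|apply: aeq_refl].
Qed.
Lemma qsc1 : left_id 1 qsc.
Proof. qelim; apply: cl_eq; exact: aeq_mul1l. Qed.
Lemma qscDr : right_distributive qsc +%R.
Proof. move=> k; qelim; rewrite !clD qscE; apply: cl_eq; exact: aeq_mulDr. Qed.
Lemma qscDl v : {morph qsc^~ v: a b / a + b}.
Proof.
move=> a b; move: v; qelim; rewrite !clD; apply: cl_eq; rewrite /ascale; apply: aeq_trans; [|apply: aeq_mulDl].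
by apply: aeq_mul; [apply: aeq_sym; apply: aeq_constD|apply: aeq_refl].
Qed.

HB.instance Definition _ := GRing.Zmodule_isLmodule.Build F Qt qscA qsc1 qscDr qscDl.

End Quot.



Section Comm.
Variable R : pzRingType.
Definition cm (x y : R) := x * y - y * x.
Lemma cmDl x y z : cm (x + y) z = cm x z + cm y z.
Proof. by rewrite /cm mulrDl mulrDr opprD addrACA. Qed.
Lemma cmDr x y z : cm x (y + z) = cm x y + cm x z.
Proof. by rewrite /cm mulrDl mulrDr opprD addrACA. Qed.
Lemma cmNl x y : cm (- x) y = - cm x y.
Proof. by rewrite /cm mulNr mulrN opprB opprK addrC. Qed.
Lemma cmNr x y : cm x (- y) = - cm x y.
Proof. by rewrite /cm mulNr mulrN opprB opprK addrC. Qed.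
Lemma cm0l y : cm 0 y = 0. Proof. by rewrite /cm mul0r mulr0 subrr. Qed.
Lemma cm0r y : cm y 0 = 0. Proof. by rewrite /cm mul0r mulr0 subrr. Qed.
Lemma cmsuml I (r : seq I) P (G : I -> R) y :
  cm (\sum_(i <- r | P i) G i) y = \sum_(i <- r | P i) cm (G i) y.
Proof.
elim/big_rec2: _ => [|i a b _ <-]; first by rewrite cm0l.
by rewrite cmDl.
Qed.
Lemma cmsumr I (r : seq I) P (G : I -> R) y :
  cm y (\sum_(i <- r | P i) G i) = \sum_(i <- r | P i) cm y (G i).
Proof.
elim/big_rec2: _ => [|i a b _ <-]; first by rewrite cm0r.
by rewrite cmDr.
Qed.
Lemma cmMl x y z : cm (x * y) z = x * cm y z + cm x z * y.
Proof.
rewrite /cm mulrBr mulrBl !mulrA addrA; congr (_ + _).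
by rewrite -addrA addNr addr0.
Qed.
Lemma cmMr x y z : cm x (y * z) = cm x y * z + y * cm x z.
Proof.
rewrite /cm mulrBr mulrBl !mulrA addrA; congr (_ + _).
by rewrite -addrA addNr addr0.
Qed.
Lemma cmxx x : cm x x = 0. Proof. exact: subrr. Qed.
Lemma cmC x y : cm y x = - cm x y. Proof. by rewrite /cm opprB. Qed.
Lemma cm0E x y : cm x y = 0 -> x * y = y * x.
Proof. by move/eqP; rewrite subr_eq0 => /eqP. Qed.
Lemma cmE0 x y : x * y = y * x -> cm x y = 0.
Proof. by move=> h; rewrite /cm h subrr. Qed.
Lemma cm_der x y z : cm x (cm y z) = cm (cm x y) z + cm y (cm x z).
Proof.
have -> : cm y z = y * z - z * y by [].
rewrite cmDr cmNr !cmMr; set A := cm x y; set B := cm x z.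
rewrite /cm opprD [- (B * y) + _]addrC.
by rewrite addrACA.
Qed.
Lemma jacobi x y z : cm x (cm y z) + cm y (cm z x) + cm z (cm x y) = 0.
Proof.
rewrite cm_der [cm z x]cmC cmNr [cm z (cm x y)]cmC.
by rewrite addrK subrr.
Qed.
End Comm.

Section QAlg.
Variables (F : fieldType) (d n : nat) (c : 'I_d -> 'I_d -> 'I_d -> F).
Local Notation T := (aterm F d n).
Local Notation Q := (@Qt F d n c).
Local Notation cl := (@cl F d n c).

Lemma clZ k t : cl (ascale k t) = k *: cl t.
Proof. by rewrite -qscE. Qed.
Lemma clC k : cl (AConst k) = k *: (1 : Q).
Proof.
rewrite -cl1 -clZ -{1}(mulr1 k); apply: cl_eq; apply: aeq_sym; exact: aeq_constM.
Qed.
Lemma clB t u : cl (asub t u) = cl t - cl u.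
Proof. by rewrite /asub -clD clZ scaleN1r. Qed.
Lemma clS (s : seq T) : cl (asum s) = \sum_(t <- s) cl t.
Proof.
elim: s => [|t s IH]; first by rewrite big_nil /asum /= cl0.
by rewrite big_cons -IH -clD.
Qed.
Lemma qZl k (u v : Q) : k *: (u * v) = (k *: u) * v.
Proof.
elim/Qind: u => u; elim/Qind: v => v.
rewrite clM -!clZ clM; apply: cl_eq; apply: aeq_sym; exact: aeq_mulA.
Qed.
Lemma qZr k (u v : Q) : k *: (u * v) = u * (k *: v).
Proof.
elim/Qind: u => u; elim/Qind: v => v.
rewrite clM -!clZ clM; apply: cl_eq; rewrite /ascale.
apply: aeq_trans; first by apply: aeq_constC.
apply: aeq_trans; first by apply: aeq_mulA.
apply: aeq_mul; first by apply: aeq_refl.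
apply: aeq_sym; apply: aeq_constC.
Qed.
Lemma cmZl k (u v : Q) : cm (k *: u) v = k *: cm u v.
Proof. by rewrite /cm scalerBr -qZl -qZr. Qed.
Lemma cmZr k (u v : Q) : cm u (k *: v) = k *: cm u v.
Proof. by rewrite /cm scalerBr -qZl -qZr. Qed.

Definition Xg a : Q := cl (aX a).
Definition Dg a : Q := cl (aD a).
Definition Eg i a : Q := cl (aE i a).

Lemma relE t u : arel c t u -> cl t = cl u.
Proof. by move=> h; apply: cl_eq; apply: aeq_rel. Qed.

Lemma cmXX a b : cm (Xg a) (Xg b) = 0.
Proof. by apply: cmE0; rewrite /Xg !clM; apply: relE; apply: arel_xx. Qed.
Lemma cmDD a b : cm (Dg a) (Dg b) = 0.
Proof. by apply: cmE0; rewrite /Dg !clM; apply: relE; apply: arel_dd. Qed.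
Lemma cmDX a b : cm (Dg a) (Xg b) = (a == b)%:R.
Proof.
rewrite /cm /Dg /Xg !clM (relE (arel_dx _ _ _ _)) -clD addrC addKr.
by case: (a == b); rewrite clC ?scale1r ?scale0r.
Qed.
Lemma cmXD a b : cm (Xg a) (Dg b) = - (b == a)%:R.
Proof. by rewrite cmC cmDX. Qed.
Lemma cmEE i a b : cm (Eg i a) (Eg i b) = \sum_k c a b k *: Eg i k.
Proof.
rewrite /cm /Eg !clM (relE (arel_ee _ _ _ _)) -clD addrC addKr clS big_map.
by rewrite big_enum; apply: eq_bigr => k _; rewrite clZ.
Qed.
Lemma cmEE' i j a b : i != j -> cm (Eg i a) (Eg j b) = 0.
Proof. by move=> h; apply: cmE0; rewrite /Eg !clM; apply: relE; apply: arel_ee'. Qed.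
Lemma cmXE a i b : cm (Xg a) (Eg i b) = 0.
Proof. by apply: cmE0; rewrite /Xg /Eg !clM; apply: relE; apply: arel_xe. Qed.
Lemma cmDE a i b : cm (Dg a) (Eg i b) = 0.
Proof. by apply: cmE0; rewrite /Dg /Eg !clM; apply: relE; apply: arel_de. Qed.
Lemma cmEX a i b : cm (Eg i b) (Xg a) = 0.
Proof. by rewrite cmC cmXE oppr0. Qed.
Lemma cmED a i b : cm (Eg i b) (Dg a) = 0.
Proof. by rewrite cmC cmDE oppr0. Qed.
End QAlg.



Fixpoint fr (F : fieldType) (d n : nat) (u : lterm F n) : aterm F d n :=
  match u with
  | LV (LX i) => asum [seq AMul (aX al) (aE i al) | al <- enum 'I_d]
  | LV (LY i) => ascale (-1) (asum [seq AMul (aD al) (aE i al) | al <- enum 'I_d])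
  | LV (LT i j) => if i == j then AConst 0
                   else asum [seq AMul (aE i al) (aE j al) | al <- enum 'I_d]
  | L0 => AConst 0
  | LAdd u v => AAdd (fr d u) (fr d v)
  | LSc k u => ascale k (fr d u)
  | LBr u v => asub (AMul (fr d u) (fr d v)) (AMul (fr d v) (fr d u))
  end.

Section Ideal.
Variables (F : fieldType) (d n : nat) (c : 'I_d -> 'I_d -> 'I_d -> F).
Local Notation T := (aterm F d n).
Local Notation Q := (@Qt F d n c).
Local Notation cl := (@cl F d n c).
Local Notation Xg := (@Xg F d n c).
Local Notation Dg := (@Dg F d n c).
Local Notation Eg := (@Eg F d n c).

Definition Xo b : Q := \sum_al \sum_ga (c b al ga *: Xg ga) * Dg al.
Definition Yv b : Q := Xo b + \sum_i Eg i b.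

Lemma clXo b : cl (aXop c b) = Xo b.
Proof.
rewrite /aXop clS big_allpairs_dep /Xo big_enum /=; apply: eq_bigr => al _.
by rewrite big_enum; apply: eq_bigr => ga _; rewrite -clM clZ.
Qed.
Lemma clY b : cl (aY c b) = Yv b.
Proof. by rewrite /aY -clD clXo clS big_map big_enum. Qed.

Definition Iq (q : Q) := exists s : seq (Q * 'I_d), q = \sum_(p <- s) p.1 * Yv p.2.

Lemma inIE t : inI c t <-> Iq (cl t).
Proof.
split.
  case=> s /cl_eq ->; exists [seq (cl p.1, p.2) | p <- s].
  rewrite clS !big_map; apply: eq_bigr => p _; by rewrite -clM clY.
case=> s E; exists [seq (rep p.1, p.2) | p <- s]; apply: eq_cl.
rewrite E clS !big_map; apply: eq_bigr => p _; by rewrite -clM clY repK.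
Qed.

Lemma Iq0 : Iq 0. Proof. by exists [::]; rewrite big_nil. Qed.
Lemma IqD x y : Iq x -> Iq y -> Iq (x + y).
Proof. by case=> s -> [s' ->]; exists (s ++ s'); rewrite big_cat. Qed.
Lemma IqMl a x : Iq x -> Iq (a * x).
Proof.
case=> s ->; exists [seq (a * p.1, p.2) | p <- s].
rewrite big_map mulr_sumr; apply: eq_bigr => p _; by rewrite mulrA.
Qed.
Lemma IqZ k x : Iq x -> Iq (k *: x).
Proof. by move=> h; rewrite -[x]mul1r qZl; apply: IqMl. Qed.
Lemma IqN x : Iq x -> Iq (- x).
Proof. by move=> h; rewrite -scaleN1r; apply: IqZ. Qed.
Lemma IqB x y : Iq x -> Iq y -> Iq (x - y).
Proof. by move=> hx hy; apply: IqD => //; apply: IqN. Qed.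
Lemma IqY a b : Iq (a * Yv b).
Proof. by exists [:: (a, b)]; rewrite big_seq1. Qed.
Lemma Iqsum I (r : seq I) (P : pred I) (G : I -> Q) :
  (forall i, P i -> Iq (G i)) -> Iq (\sum_(i <- r | P i) G i).
Proof.
move=> h; elim/big_rec: _ => [|i x Pi hx]; first exact: Iq0.
by apply: IqD => //; apply: h.
Qed.
Lemma Iq_eq x y : x = y -> Iq x -> Iq y. Proof. by move=> ->. Qed.

Definition Nq (q : Q) := forall b, Iq (Yv b * q).

Lemma IqMN x y : Iq x -> Nq y -> Iq (x * y).
Proof.
case=> s -> hy; rewrite mulr_suml; apply: Iqsum => p _.
by rewrite -mulrA; apply: IqMl.
Qed.
Lemma Nq0 : Nq 0. Proof. by move=> b; rewrite mulr0; exact: Iq0. Qed.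
Lemma NqD x y : Nq x -> Nq y -> Nq (x + y).
Proof. by move=> hx hy b; rewrite mulrDr; apply: IqD. Qed.
Lemma NqZ k x : Nq x -> Nq (k *: x).
Proof. by move=> hx b; rewrite -qZr; apply: IqZ. Qed.
Lemma NqN x : Nq x -> Nq (- x).
Proof. by move=> hx b; rewrite mulrN; apply: IqN. Qed.
Lemma NqM x y : Nq x -> Nq y -> Nq (x * y).
Proof. by move=> hx hy b; rewrite mulrA; apply: IqMN. Qed.
Lemma Nqcm x y : Nq x -> Nq y -> Nq (cm x y).
Proof. by move=> hx hy; rewrite /cm; apply: NqD; [apply: NqM|apply: NqN; apply: NqM]. Qed.
Lemma Nq_comm x : (forall b, cm (Yv b) x = 0) -> Nq x.
Proof. by move=> h b; rewrite (cm0E (h b)); apply: IqY. Qed.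

Lemma Iq_cm a a' b b' : Iq (a - a') -> Iq (b - b') -> Nq a' -> Nq b ->
  Iq (cm a b - cm a' b').
Proof.
move=> ha hb Na' Nb.
have -> : cm a b - cm a' b' = cm (a - a') b + cm a' (b - b').
  by rewrite cmDl cmNl cmDr cmNr addrA subrK.
rewrite /cm.
apply: IqD; apply: IqB; by [apply: IqMN | apply: IqMl].
Qed.

Definition Fq (u : lterm F n) : Q := cl (fr d u).
Definition xv i : Q := \sum_a Xg a * Eg i a.
Definition yv i : Q := - \sum_a Dg a * Eg i a.
Definition tv i j : Q := \sum_a Eg i a * Eg j a.

Lemma FqD u v : Fq (LAdd u v) = Fq u + Fq v. Proof. by rewrite /Fq /= -clD. Qed.
Lemma FqZ k u : Fq (LSc k u) = k *: Fq u. Proof. by rewrite /Fq /= clZ. Qed.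
Lemma FqB u v : Fq (LBr u v) = cm (Fq u) (Fq v). Proof. by rewrite /Fq /= clB -!clM. Qed.
Lemma Fq0 : Fq L0 = 0. Proof. by []. Qed.
Lemma Fqx i : Fq (lx i) = xv i.
Proof. by rewrite /Fq /= clS big_map big_enum; apply: eq_bigr => a _; rewrite -clM. Qed.
Lemma Fqy i : Fq (ly i) = yv i.
Proof.
rewrite /Fq /= clZ scaleN1r clS big_map big_enum; congr (- _).
by apply: eq_bigr => a _; rewrite -clM.
Qed.
Lemma Fqt i j : i != j -> Fq (lt i j) = tv i j.
Proof.
move=> /negbTE h; rewrite /Fq /= h clS big_map big_enum.
by apply: eq_bigr => a _; rewrite -clM.
Qed.
Lemma Fqtii i : Fq (lt i i) = 0. Proof. by rewrite /Fq /= eqxx. Qed.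
Lemma Fqsum (s : seq (lterm F n)) : Fq (lsum s) = \sum_(u <- s) Fq u.
Proof. elim: s => [|u s IH]; first by rewrite big_nil. by rewrite big_cons -IH -FqD. Qed.

End Ideal.



Section Comp.
Variables (F : fieldType) (d n : nat) (c : 'I_d -> 'I_d -> 'I_d -> F).
Hypothesis hc : quadratic_lie c.
Local Notation Q := (@Qt F d n c).
Local Notation cl := (@cl F d n c).
Local Notation Xg := (@Xg F d n c).
Local Notation Dg := (@Dg F d n c).
Local Notation Eg := (@Eg F d n c).
Local Notation Yv := (@Yv F d n c).
Local Notation Xo := (@Xo F d n c).
Local Notation xv := (@xv F d n c).
Local Notation yv := (@yv F d n c).
Local Notation tv := (@tv F d n c).

Lemma cA a b k : c a b k = - c b a k. Proof. by case: hc. Qed.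
Lemma cI a b e : c a b e = c b e a. Proof. by case: hc. Qed.
Lemma c23 a b k : c a k b = - c a b k.
Proof. by rewrite cI cA -cI. Qed.
Lemma c13 a b k : c k b a = - c a b k.
Proof. by rewrite (cI a) (cA b) opprK. Qed.

Lemma sdl (G : 'I_d -> Q) a : \sum_k (k == a)%:R * G k = G a.
Proof.
rewrite (bigD1 a) //= eqxx mul1r big1 ?addr0 // => k /negbTE ->.
by rewrite mul0r.
Qed.
Lemma sdr (G : 'I_d -> Q) a : \sum_k G k * (k == a)%:R = G a.
Proof.
rewrite (bigD1 a) //= eqxx mulr1 big1 ?addr0 // => k /negbTE ->.
by rewrite mulr0.
Qed.

Lemma sum2_swap (G : 'I_d -> 'I_d -> Q) :
  \sum_a \sum_k G k a = \sum_a \sum_k G a k.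
Proof. exact: exchange_big. Qed.

Lemma sum2_anti (G : 'I_d -> 'I_d -> Q) (w : 'I_d -> 'I_d -> F) :
  (forall a k, w k a = - w a k) ->
  \sum_a \sum_k w a k *: G k a + \sum_a \sum_k w a k *: G a k = 0.
Proof.
move=> hw; rewrite exchange_big /=.
rewrite (eq_bigr (fun a => - \sum_k w a k *: G a k)) ?sumrN ?addNr // => a _.
by rewrite -sumrN; apply: eq_bigr => k _; rewrite hw scaleNr.
Qed.

Lemma cm0Ml (x y z : Q) : cm x z = 0 -> cm y z = 0 -> cm (x * y) z = 0.
Proof. by move=> h1 h2; rewrite cmMl h1 h2 mulr0 mul0r addr0. Qed.
Lemma cm0Mr (x y z : Q) : cm z x = 0 -> cm z y = 0 -> cm z (x * y) = 0.
Proof. by move=> h1 h2; rewrite cmMr h1 h2 mulr0 mul0r addr0. Qed.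
Lemma cm0suml I (r : seq I) (P : pred I) (G : I -> Q) z :
  (forall i, cm (G i) z = 0) -> cm (\sum_(i <- r | P i) G i) z = 0.
Proof. by move=> h; rewrite cmsuml big1. Qed.
Lemma cm0sumr I (r : seq I) (P : pred I) (G : I -> Q) z :
  (forall i, cm z (G i) = 0) -> cm z (\sum_(i <- r | P i) G i) = 0.
Proof. by move=> h; rewrite cmsumr big1. Qed.
Lemma cm0Nl (x z : Q) : cm x z = 0 -> cm (- x) z = 0.
Proof. by move=> h; rewrite cmNl h oppr0. Qed.
Lemma cm0Nr (x z : Q) : cm z x = 0 -> cm z (- x) = 0.
Proof. by move=> h; rewrite cmNr h oppr0. Qed.
Lemma cm0Zl k (x z : Q) : cm x z = 0 -> cm (k *: x) z = 0.
Proof. by move=> h; rewrite cmZl h scaler0. Qed.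
Lemma cm0Zr k (x z : Q) : cm z x = 0 -> cm z (k *: x) = 0.
Proof. by move=> h; rewrite cmZr h scaler0. Qed.

Lemma cmXoE b i a : cm (Xo b) (Eg i a) = 0.
Proof.
apply: cm0suml => al; apply: cm0suml => ga; apply: cm0Ml; last exact: cmDE.
by apply: cm0Zl; apply: cmXE.
Qed.

Lemma cmYE b i a : cm (Yv b) (Eg i a) = \sum_k c b a k *: Eg i k.
Proof.
rewrite /Yv cmDl cmXoE add0r cmsuml (bigD1 i) //= cmEE.
rewrite [X in _ + X]big1 ?addr0 // => l hl.
by apply: cmEE'.
Qed.
Lemma cmYX b a : cm (Yv b) (Xg a) = \sum_g c b a g *: Xg g.
Proof.
have h0 : cm (\sum_i Eg i b) (Xg a) = 0 by apply: cm0suml => i; apply: cmEX.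
rewrite /Yv cmDl h0 addr0.
rewrite /Xo cmsuml (bigD1 a) //= [X in _ + X]big1 ?addr0; last first.
  move=> al hal; apply: cm0suml => g; rewrite cmMl cmDX cmZl cmXX.
  by rewrite scaler0 mul0r addr0 (negbTE hal) mulr0.
rewrite cmsuml; apply: eq_bigr => g _.
by rewrite cmMl cmDX cmZl cmXX scaler0 mul0r addr0 eqxx mulr1.
Qed.
Lemma cmYD b a : cm (Yv b) (Dg a) = - \sum_al c b al a *: Dg al.
Proof.
have h0 : cm (\sum_i Eg i b) (Dg a) = 0 by apply: cm0suml => i; apply: cmED.
rewrite /Yv cmDl h0 addr0.
rewrite /Xo cmsuml -sumrN; apply: eq_bigr => al _.
rewrite cmsuml (bigD1 a) //= [X in _ + X]big1 ?addr0; last first.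
  move=> g hg; rewrite cmMl cmDD cmZl cmXD.
  by rewrite mulr0 add0r eq_sym (negbTE hg) oppr0 scaler0 mul0r.
by rewrite cmMl cmDD cmZl cmXD mulr0 add0r eqxx scalerN mulNr -qZl mul1r.
Qed.

Lemma cmYx b i : cm (Yv b) (xv i) = 0.
Proof.
rewrite -[RHS](sum2_anti (fun x y => Xg x * Eg i y) (c23 b)) -big_split /=.
rewrite /xv cmsumr; apply: eq_bigr => a _.
rewrite cmMr cmYX cmYE mulr_suml mulr_sumr; congr (_ + _); apply: eq_bigr => k _.
  by rewrite -qZl.
by rewrite -qZr.
Qed.
Lemma cmYy b i : cm (Yv b) (yv i) = 0.
Proof.
rewrite /yv cmNr cmsumr (eq_bigr (fun a => - (\sum_k c b k a *: (Dg k * Eg i a))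
   + \sum_k c b a k *: (Dg a * Eg i k))); last first.
  move=> a _; rewrite cmMr cmYD cmYE mulNr mulr_suml mulr_sumr; congr (- _ + _).
    by apply: eq_bigr => k _; rewrite -qZl.
  by apply: eq_bigr => k _; rewrite -qZr.
by rewrite big_split /= sumrN exchange_big /= addNr oppr0.
Qed.
Lemma cmYt b i j : cm (Yv b) (tv i j) = 0.
Proof.
rewrite -[RHS](sum2_anti (fun x y => Eg i x * Eg j y) (c23 b)) -big_split /=.
rewrite /tv cmsumr; apply: eq_bigr => a _.
rewrite cmMr !cmYE mulr_suml mulr_sumr; congr (_ + _); apply: eq_bigr => k _.
  by rewrite -qZl.
by rewrite -qZr.
Qed.

Lemma Rtsym i j : i != j -> tv i j = tv j i.
Proof. by move=> h; apply: eq_bigr => a _; apply: cm0E; apply: cmEE'. Qed.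

Lemma Rtt i j k l : uniq [:: i; j; k; l] -> cm (tv i j) (tv k l) = 0.
Proof.
rewrite /= !inE !negb_or => /and4P[/and3P[hik hil hjk] /andP[hjk' hjl] hkl _].
apply: cm0suml => a; apply: cm0sumr => b.
apply: cm0Ml; apply: cm0Mr; apply: cmEE' => //.
Qed.

Lemma Rxt i j k : [&& i != j, i != k & j != k] -> cm (xv i) (tv j k) = 0.
Proof.
case/and3P => hij hik hjk; apply: cm0suml => a; apply: cm0Ml.
  by apply: cm0sumr => b; apply: cm0Mr; apply: cmXE.
by apply: cm0sumr => b; apply: cm0Mr; apply: cmEE'.
Qed.
Lemma Ryt i j k : [&& i != j, i != k & j != k] -> cm (yv i) (tv j k) = 0.
Proof.
case/and3P => hij hik hjk; apply: cm0Nl; apply: cm0suml => a; apply: cm0Ml.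
  by apply: cm0sumr => b; apply: cm0Mr; apply: cmDE.
by apply: cm0sumr => b; apply: cm0Mr; apply: cmEE'.
Qed.
Lemma Rxx i j : cm (xv i) (xv j) = 0.
Proof.
have [->|hij] := eqVneq i j; first exact: cmxx.
apply: cm0suml => a; apply: cm0Ml.
  by apply: cm0sumr => b; apply: cm0Mr; [apply: cmXX|apply: cmXE].
by apply: cm0sumr => b; apply: cm0Mr; [apply: cmEX|apply: cmEE'].
Qed.
Lemma Ryy i j : cm (yv i) (yv j) = 0.
Proof.
have [->|hij] := eqVneq i j; first exact: cmxx.
apply: cm0Nl; apply: cm0Nr; apply: cm0suml => a; apply: cm0Ml.
  by apply: cm0sumr => b; apply: cm0Mr; [apply: cmDD|apply: cmDE].
by apply: cm0sumr => b; apply: cm0Mr; [apply: cmED|apply: cmEE'].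
Qed.

Lemma Rxy i j : i != j -> cm (xv i) (yv j) = tv i j.
Proof.
move=> hij; rewrite /xv /yv cmNr cmsuml -sumrN /tv; apply: eq_bigr => a _.
rewrite cmsumr (eq_bigr (fun b => - ((b == a)%:R * (Eg j b * Eg i a)))); last first.
  move=> b _; rewrite cmMl (cm0Mr (cmED _ _ _ _) (cmEE' _ _ _ hij)) mulr0 add0r.
  by rewrite cmMr cmXE mulr0 addr0 cmXD !mulNr -mulrA.
rewrite sumrN opprK (sdl (fun b => Eg j b * Eg i a)).
by apply: cm0E; apply: cmEE'; rewrite eq_sym.
Qed.

Lemma Rt4 i j k : [&& i != j, i != k & j != k] ->
  cm (tv i j) (tv i k + tv j k) = 0.
Proof.
case/and3P => hij hik hjk.
have hji : j != i by rewrite eq_sym.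
have hki : k != i by rewrite eq_sym.
have hkj : k != j by rewrite eq_sym.
rewrite cmDr /tv !cmsuml -big_split /=.
rewrite (eq_bigr (fun a => \sum_b (\sum_m c a b m *: (Eg i m * Eg j a * Eg k b)
          + \sum_m c a b m *: (Eg i a * Eg j m * Eg k b)))); last first.
  move=> a _; rewrite !cmsumr -big_split; apply: eq_bigr => b _; congr (_ + _).
    rewrite cmMl (cm0Mr (cmEE' _ _ _ hji) (cmEE' _ _ _ hjk)) mulr0 add0r.
    rewrite cmMr cmEE (cmEE' _ _ _ hik) mulr0 addr0 !mulr_suml.
    apply: eq_bigr => m _; rewrite -!qZl -!mulrA; congr (_ *: _); congr (_ * _).
    by apply: cm0E; apply: cmEE'.
  rewrite cmMl (cm0Mr (cmEE' _ _ _ hij) (cmEE' _ _ _ hik)) mul0r addr0.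
  rewrite cmMr cmEE (cmEE' _ _ _ hjk) mulr0 addr0 mulr_suml mulr_sumr.
  by apply: eq_bigr => m _; rewrite -qZl -qZr mulrA.
rewrite exchange_big /= big1 // => b _; rewrite big_split /=.
exact: (sum2_anti (fun x y => Eg i x * Eg j y * Eg k b) (fun a m => c13 a b m)).
Qed.

Lemma Rgt (G : 'I_d -> Q) i j : i != j -> (forall a l b, cm (G a) (Eg l b) = 0) ->
  cm (\sum_a G a * Eg i a + \sum_a G a * Eg j a) (tv i j) = 0.
Proof.
move=> hij hG.
have hji : j != i by rewrite eq_sym.
rewrite cmDl !cmsuml -big_split /= big1 // => a _.
rewrite /tv !cmsumr -big_split /=.
rewrite (eq_bigr (fun b => \sum_m c a b m *: (G a * Eg i m * Eg j b)
          + \sum_m c a b m *: (G a * Eg i b * Eg j m))); last first.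
  move=> b _; congr (_ + _).
    rewrite cmMl (cm0Mr (hG _ _ _) (hG _ _ _)) mul0r addr0.
    rewrite cmMr cmEE (cmEE' _ _ _ hij) mulr0 addr0 mulr_suml mulr_sumr.
    by apply: eq_bigr => m _; rewrite -qZl -qZr mulrA.
  rewrite cmMl (cm0Mr (hG _ _ _) (hG _ _ _)) mul0r addr0.
  rewrite cmMr cmEE (cmEE' _ _ _ hji) mul0r add0r !mulr_sumr.
  by apply: eq_bigr => m _; rewrite -!qZr mulrA.
rewrite big_split /=; exact: (sum2_anti (fun x y => G a * Eg i x * Eg j y) (fun b m => c23 a b m)).
Qed.

Lemma Rxxt i j : i != j -> cm (xv i + xv j) (tv i j) = 0.
Proof. by move=> h; apply: Rgt => // a l b; apply: cmXE. Qed.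
Lemma Ryyt i j : i != j -> cm (yv i + yv j) (tv i j) = 0.
Proof.
move=> h; rewrite /yv -opprD; apply: cm0Nl.
by apply: Rgt => // a l b; apply: cmDE.
Qed.

Hypothesis h2 : (2 : F) != 0.

Lemma half (x : Q) : x + x = 0 -> x = 0.
Proof.
move=> h; rewrite -[x]scale1r -(mulVf h2) -scalerA scaler_nat (mulr2n x) h.
exact: scaler0.
Qed.
Lemma symanti (G : 'I_d -> 'I_d -> Q) (w : 'I_d -> 'I_d -> F) :
  (forall a k, w k a = - w a k) -> (forall a k, G k a = G a k) ->
  \sum_a \sum_k w a k *: G a k = 0.
Proof.
move=> hw hG; apply: half.
have E : \sum_a \sum_k w a k *: G k a = \sum_a \sum_k w a k *: G a k.
  by apply: eq_bigr => a _; apply: eq_bigr => k _; rewrite hG.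
by rewrite -{1}E; apply: sum2_anti.
Qed.
Lemma cF0 a b : c a b a = 0.
Proof.
have h : c a b a = - c a b a by rewrite {1}cI cA.
have : (2 : F) * c a b a = 0 by rewrite mulr_natl mulr2n {1}h addNr.
by move/eqP; rewrite mulf_eq0 (negbTE h2) /= => /eqP.
Qed.

Lemma Rsumx : Iq (\sum_i xv i).
Proof.
have -> : \sum_i xv i = \sum_a Xg a * Yv a - \sum_a Xg a * Xo a.
  rewrite /xv exchange_big /= -sumrB; apply: eq_bigr => a _.
  by rewrite -mulrBr /Yv [Xo a + _]addrC addrK mulr_sumr.
have -> : \sum_a Xg a * Xo a = 0.
  rewrite (eq_bigr (fun a => \sum_al \sum_ga c a al ga *: (Xg a * Xg ga * Dg al)));
    last first.
    move=> a _; rewrite /Xo mulr_sumr; apply: eq_bigr => al _; rewrite mulr_sumr.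
    by apply: eq_bigr => ga _; rewrite mulrA -qZr -qZl.
  rewrite exchange_big /= big1 // => al _.
  apply: (symanti (G := fun x y => Xg x * Xg y * Dg al) (w := fun x y => c x al y)).
    by move=> a k; apply: c13.
  by move=> a k; congr (_ * _); apply: cm0E; apply: cmXX.
rewrite subr0; apply: Iqsum => a _; exact: IqY.
Qed.

Lemma Rsumy : Iq (\sum_i yv i).
Proof.
have -> : \sum_i yv i = \sum_a Dg a * Xo a - \sum_a Dg a * Yv a.
  rewrite /yv sumrN exchange_big /= -sumrB -sumrN; apply: eq_bigr => a _.
  rewrite -mulrBr -mulr_sumr -mulrN; congr (_ * _).
  by rewrite /Yv opprD addrA subrr add0r.
have -> : \sum_a Dg a * Xo a = 0.
  rewrite (eq_bigr (fun a => \sum_al \sum_ga c a al ga *: (Xg ga * Dg a * Dg al)));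
    last first.
    move=> a _; rewrite /Xo mulr_sumr; apply: eq_bigr => al _; rewrite mulr_sumr.
    apply: eq_bigr => ga _; rewrite mulrA -qZr -qZl.
    have -> : Dg a * Xg ga = Xg ga * Dg a + (a == ga)%:R.
      by rewrite -cmDX /cm addrC subrK.
    rewrite mulrDl scalerDr.
    suff -> : c a al ga *: ((a == ga)%:R * Dg al) = 0 by rewrite addr0.
    have [->|hne] := eqVneq a ga; first by rewrite cF0 scale0r.
    by rewrite mul0r scaler0.
  rewrite (eq_bigr (fun a => \sum_ga \sum_al c a al ga *: (Xg ga * Dg a * Dg al)));
    last by move=> a _; rewrite exchange_big.
  rewrite exchange_big /= big1 // => ga _.
  apply: (symanti (G := fun x y => Xg ga * Dg x * Dg y) (w := fun x y => c x y ga)).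
    by move=> a k; apply: cA.
  by move=> a k; rewrite -!mulrA; congr (_ * _); apply: cm0E; apply: cmDD.
rewrite sub0r; apply: IqN; apply: Iqsum => a _; exact: IqY.
Qed.

Lemma Rxyii i : Iq (cm (xv i) (yv i) + \sum_(j | j != i) tv i j).
Proof.
have A : forall a b, cm (Xg a * Eg i a) (Dg b * Eg i b) =
    \sum_m c a b m *: (Xg a * Dg b * Eg i m) - (b == a)%:R * (Eg i b * Eg i a).
  move=> a b; rewrite cmMl cmMr cmED mul0r add0r cmEE cmMr cmXE mulr0 addr0 cmXD.
  rewrite mulNr mulNr -mulrA; congr (_ - _); rewrite mulrA mulr_sumr.
  by apply: eq_bigr => m _; rewrite -qZr.
have -> : cm (xv i) (yv i) =
    - \sum_a \sum_b \sum_m c a b m *: (Xg a * Dg b * Eg i m) + \sum_a Eg i a * Eg i a.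
  rewrite /xv /yv cmNr cmsuml.
  rewrite (eq_bigr (fun a => \sum_b \sum_m c a b m *: (Xg a * Dg b * Eg i m)
      - \sum_b (b == a)%:R * (Eg i b * Eg i a))); last first.
    by move=> a _; rewrite cmsumr -sumrB; apply: eq_bigr => b _; apply: A.
  rewrite sumrB opprB addrC; congr (- _ + _); apply: eq_bigr => a _.
  exact: (sdl (fun b => Eg i b * Eg i a)).
have -> : \sum_(j | j != i) tv i j = \sum_a Eg i a * (Yv a - Xo a) - \sum_a Eg i a * Eg i a.
  rewrite -[\sum_a Eg i a * Eg i a]/(tv i i).
  have -> : \sum_a Eg i a * (Yv a - Xo a) = \sum_j tv i j.
    rewrite /tv exchange_big /=; apply: eq_bigr => a _.
    by rewrite /Yv [Xo a + _]addrC addrK mulr_sumr.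
  by rewrite [\sum_(j < n) tv i j](bigD1 i) //= addrAC subrr add0r.
have hh : forall p q r : Q, - p + q + (r - q) = r - p by move=> p q r; rewrite addrACA subrr addr0 addrC.
rewrite hh.
rewrite (eq_bigr (fun a => Eg i a * Yv a - Eg i a * Xo a)); last by move=> a _; rewrite mulrBr.
rewrite sumrB -addrA -opprD; apply: IqB; first by apply: Iqsum => a _; apply: IqY.
suff -> : \sum_a Eg i a * Xo a + \sum_a \sum_b \sum_m c a b m *: (Xg a * Dg b * Eg i m) = 0.
  exact: Iq0.
rewrite (eq_bigr (fun a => \sum_b \sum_g c a b g *: (Xg g * Dg b * Eg i a))); last first.
  move=> a _; rewrite /Xo mulr_sumr; apply: eq_bigr => b _; rewrite mulr_sumr.
  apply: eq_bigr => g _; rewrite -qZl -qZr; congr (_ *: _).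
  by rewrite mulrA (cm0E (cmEX _ _ _ _)) -[Xg g * Eg i a * Dg b]mulrA (cm0E (cmED _ _ _ _)) mulrA.
rewrite exchange_big /= [X in _ + X]exchange_big /= -big_split /= big1 // => b _.
exact: (sum2_anti (fun x y => Xg x * Dg b * Eg i y) (fun a m => c13 a b m)).
Qed.

End Comp.



Section Final.
Variables (F : fieldType) (d n : nat) (c : 'I_d -> 'I_d -> 'I_d -> F).
Hypothesis hc : quadratic_lie c.
Hypothesis h2 : (2 : F) != 0.
Local Notation Q := (@Qt F d n c).
Local Notation cl := (@cl F d n c).
Local Notation Fq := (@Fq F d n c).
Local Notation xv := (@xv F d n c).
Local Notation yv := (@yv F d n c).
Local Notation tv := (@tv F d n c).
Local Notation Iq := (@Iq F d n c).
Local Notation Nq := (@Nq F d n c).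

Lemma Fq_N u : Nq (Fq u).
Proof.
elim: u => [g| |u IHu v IHv|k u IHu|u IHu v IHv].
- case: g => [i|i|i j].
  + by rewrite Fqx; apply: Nq_comm => b; apply: cmYx.
  + by rewrite Fqy; apply: Nq_comm => b; apply: cmYy.
  + have [<-|hij] := eqVneq i j; first by rewrite Fqtii; apply: Nq0.
    by rewrite Fqt //; apply: Nq_comm => b; apply: cmYt.
- exact: Nq0.
- by rewrite FqD; apply: NqD.
- by rewrite FqZ; apply: NqZ.
- by rewrite FqB; apply: Nqcm.
Qed.

Lemma Iq_eq0 (x y : Q) : x = y -> Iq (x - y).
Proof. by move=> ->; rewrite subrr; apply: Iq0. Qed.
Lemma Iq_sym (x y : Q) : Iq (x - y) -> Iq (y - x).
Proof. by move=> h; rewrite -opprB; apply: IqN. Qed.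
Lemma Iq_trans (x y z : Q) : Iq (x - y) -> Iq (y - z) -> Iq (x - z).
Proof. by move=> h1 h2'; rewrite -(subrK y x) -addrA; apply: IqD. Qed.

Lemma C0 (i : 'I_n) : Iq (Fq (lt i i) - Fq lz).
Proof. by rewrite Fqtii; apply: Iq_eq0. Qed.
Lemma C1 (i j : 'I_n) : i != j -> Iq (Fq (lt i j) - Fq (lt j i)).
Proof.
move=> hij; have hji : j != i by rewrite eq_sym.
by rewrite (Fqt c hij) (Fqt c hji) (Rtsym c hij); apply: Iq_eq0.
Qed.
Lemma C2 (i j k : 'I_n) : [&& i != j, i != k & j != k] ->
  Iq (Fq (LBr (lt i j) (LAdd (lt i k) (lt j k))) - Fq lz).
Proof.
move=> h; apply: Iq_eq0; move: (h) => /and3P[hij hik hjk].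
by rewrite FqB FqD !Fqt // Rt4.
Qed.
Lemma C3 (i j k l : 'I_n) : uniq [:: i; j; k; l] -> Iq (Fq (LBr (lt i j) (lt k l)) - Fq lz).
Proof.
move=> h; apply: Iq_eq0; move: (h).
rewrite /= !inE !negb_or => /and4P[/and3P[hij hik hil] /andP[hjk hjl] hkl _].
by rewrite FqB !Fqt // Rtt.
Qed.
Lemma C4 (i j : 'I_n) : i != j -> Iq (Fq (LBr (lx i) (ly j)) - Fq (lt i j)).
Proof. by move=> hij; apply: Iq_eq0; rewrite FqB Fqx Fqy Fqt // Rxy. Qed.
Lemma C5 (i j : 'I_n) : Iq (Fq (LBr (lx i) (lx j)) - Fq lz).
Proof. by apply: Iq_eq0; rewrite FqB !Fqx Rxx. Qed.
Lemma C6 (i j : 'I_n) : Iq (Fq (LBr (ly i) (ly j)) - Fq lz).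
Proof. by apply: Iq_eq0; rewrite FqB !Fqy Ryy. Qed.
Lemma C7 (i : 'I_n) : Iq (Fq (LBr (lx i) (ly i)) -
   Fq (LSc (-1) (lsum [seq lt i j | j <- enum 'I_n & j != i]))).
Proof.
rewrite FqB Fqx Fqy FqZ Fqsum scaleN1r opprK big_map big_filter enumT.
rewrite (eq_bigr (fun j => tv i j)); first exact: Rxyii.
by move=> j hj; rewrite Fqt // eq_sym.
Qed.
Lemma C8 (i j k : 'I_n) : [&& i != j, i != k & j != k] -> Iq (Fq (LBr (lx i) (lt j k)) - Fq lz).
Proof.
move=> h; apply: Iq_eq0; move: (h) => /and3P[hij hik hjk].
by rewrite FqB Fqx Fqt // Rxt.
Qed.
Lemma C9 (i j k : 'I_n) : [&& i != j, i != k & j != k] -> Iq (Fq (LBr (ly i) (lt j k)) - Fq lz).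
Proof.
move=> h; apply: Iq_eq0; move: (h) => /and3P[hij hik hjk].
by rewrite FqB Fqy Fqt // Ryt.
Qed.
Lemma C10 (i j : 'I_n) : i != j -> Iq (Fq (LBr (LAdd (lx i) (lx j)) (lt i j)) - Fq lz).
Proof. by move=> hij; apply: Iq_eq0; rewrite FqB FqD !Fqx Fqt // Rxxt. Qed.
Lemma C11 (i j : 'I_n) : i != j -> Iq (Fq (LBr (LAdd (ly i) (ly j)) (lt i j)) - Fq lz).
Proof. by move=> hij; apply: Iq_eq0; rewrite FqB FqD !Fqy Fqt // Ryyt. Qed.
Lemma C12 : Iq (Fq (lsum [seq lx i | i <- enum 'I_n]) - Fq lz).
Proof.
rewrite Fqsum big_map big_enum /= (eq_bigr (fun i => xv i)); last by move=> i _; rewrite Fqx.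
by rewrite Fq0 subr0; apply: Rsumx.
Qed.
Lemma C13 : Iq (Fq (lsum [seq ly i | i <- enum 'I_n]) - Fq lz).
Proof.
rewrite Fqsum big_map big_enum /= (eq_bigr (fun i => yv i)); last by move=> i _; rewrite Fqy.
by rewrite Fq0 subr0; apply: Rsumy.
Qed.

Lemma Fq_rel u v : lrel u v -> Iq (Fq u - Fq v).
Proof.
case.
- exact: C0.
- exact: C1.
- exact: C2.
- exact: C3.
- exact: C4.
- exact: C5.
- exact: C6.
- exact: C7.
- exact: C8.
- exact: C9.
- exact: C10.
- exact: C11.
- exact: C12.
- exact: C13.
Time Qed.

Lemma Fq_leq u v : Defs.leq u v -> Iq (Fq u - Fq v).
Proof.
elim=> {u v}.
- by move=> u; apply: Iq_eq0.
- by move=> u v _; apply: Iq_sym.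
- by move=> u v w _ h1 _ h2'; apply: Iq_trans h1 h2'.
- move=> u u' v v' _ h1 _ h2'; rewrite !FqD opprD addrACA; exact: IqD.
- by move=> k u u' _ h; rewrite !FqZ -scalerBr; apply: IqZ.
- move=> u u' v v' _ h1 _ h2'; rewrite !FqB; apply: Iq_cm => //; exact: Fq_N.
- by move=> u v w; apply: Iq_eq0; rewrite !FqD addrA.
- by move=> u v; apply: Iq_eq0; rewrite !FqD addrC.
- by move=> u; apply: Iq_eq0; rewrite FqD Fq0 addr0.
- by move=> u; apply: Iq_eq0; rewrite FqD FqZ Fq0 scaleN1r subrr.
- by move=> u; apply: Iq_eq0; rewrite FqZ scale1r.
- by move=> k l u; apply: Iq_eq0; rewrite !FqZ scalerA.
- by move=> k l u; apply: Iq_eq0; rewrite FqD !FqZ scalerDl.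
- by move=> k u v; apply: Iq_eq0; rewrite !(FqD, FqZ) scalerDr.
- by move=> u v w; apply: Iq_eq0; rewrite !(FqB, FqD) cmDl.
- by move=> u v w; apply: Iq_eq0; rewrite !(FqB, FqD) cmDr.
- by move=> k u v; apply: Iq_eq0; rewrite !(FqB, FqZ) cmZl.
- by move=> k u v; apply: Iq_eq0; rewrite !(FqB, FqZ) cmZr.
- by move=> u; apply: Iq_eq0; rewrite FqB cmxx.
- by move=> u v w; apply: Iq_eq0; rewrite !FqD !FqB Fq0 addrA jacobi.
- by move=> u v; apply: Fq_rel.
Qed.

End Final.



Section Main.
Variables (F : fieldType) (d n : nat) (c : 'I_d -> 'I_d -> 'I_d -> F).
Hypothesis hc : quadratic_lie c.
Hypothesis h2 : (2 : F) != 0.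
Local Notation Q := (@Qt F d n c).
Local Notation cl := (@cl F d n c).
Local Notation Fq := (@Fq F d n c).
Local Notation Iq := (@Iq F d n c).
Local Notation Nq := (@Nq F d n c).

Lemma heqE (t u : aterm F d n) : heq c t u <-> Iq (cl t - cl u).
Proof. by rewrite /heq; rewrite -clB; apply: inIE. Qed.

Lemma heq_refl (t : aterm F d n) : heq c t t.
Proof. by apply/heqE; rewrite subrr; apply: Iq0. Qed.

Lemma rho_exists : is_rho c (fun u : lterm F n => fr d u).
Proof.
split.
- by move=> u b; apply/inIE; rewrite -clM clY; exact: Fq_N.
- by move=> u v h; apply/heqE; exact: Fq_leq.
- by split=> *; apply: heq_refl.
- by move=> *; apply: heq_refl.
- split.
  + by move=> i; apply: heq_refl.
  + by move=> i; apply: heq_refl.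
  + by move=> i j h; rewrite /= (negbTE h); apply: heq_refl.
Qed.

Section Uniq.
Variable f : lterm F n -> aterm F d n.
Hypothesis hf : is_rho c f.
Local Notation G u := (cl (f u)).

Lemma fN u : Nq (G u).
Proof. by case: hf => h _ _ _ _ b; move/inIE: (h u b); rewrite -clM clY. Qed.
Lemma fW u v : Defs.leq u v -> Iq (G u - G v).
Proof. by case: hf => _ h _ _ _ /h /heqE. Qed.
Lemma fA u v : Iq (G (LAdd u v) - (G u + G v)).
Proof. by case: hf => _ _ [h _] _ _; move/heqE: (h u v); rewrite -clD. Qed.
Lemma fS k u : Iq (G (LSc k u) - k *: G u).
Proof. by case: hf => _ _ [_ h] _ _; move/heqE: (h k u); rewrite clZ. Qed.
Lemma fB u v : Iq (G (LBr u v) - cm (G u) (G v)).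
Proof. by case: hf => _ _ _ h _; move/heqE: (h u v); rewrite clB -!clM. Qed.
Lemma fx i : Iq (G (lx i) - xv c i).
Proof. by case: hf => _ _ _ _ [h _ _]; move/heqE: (h i) => H; rewrite -(Fqx c i); exact: H. Qed.
Lemma fy i : Iq (G (ly i) - yv c i).
Proof. by case: hf => _ _ _ _ [_ h _]; move/heqE: (h i) => H; rewrite -(Fqy c i); exact: H. Qed.
Lemma ft i j : i != j -> Iq (G (lt i j) - tv c i j).
Proof.
Proof.
move=> hij; case: hf => _ _ _ _ [_ _ h]; move/heqE: (h i j hij) => H.
have E : cl (asum [seq AMul (aE i al) (aE j al) | al <- enum 'I_d]) = tv c i j.
  by rewrite clS big_map big_enum; apply: eq_bigr => a _; rewrite -clM.
by rewrite -E.
Qed.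
Lemma f0 : Iq (G L0).
Proof.
have h1 : Iq (G (LAdd L0 (LSc (-1) L0)) - G L0) by apply: fW; apply: leq_addN.
have h3 := fA L0 (LSc (-1) L0).
have h4 := fS (-1) L0.
set s := G (LAdd _ _) in h1 h3; set b := G (LSc _ _) in h3 h4; set a := G L0 in h1 h3 h4 *.
have E : - (s - a) + (s - (a + b)) + (b - (-1) *: a) = a.
  rewrite scaleN1r opprK opprB [a - s + _]addrA subrK opprD [a + (- a - b)]addrA subrr add0r.
  by rewrite addKr.
rewrite -E; apply: IqD; [apply: IqD; [apply: IqN|] |]; by [].
Qed.
Lemma flt i : Iq (G (lt i i)).
Proof.
have h : Iq (G (lt i i) - G L0) by apply: fW; apply: leq_rel; apply: lrel_tii.
by rewrite -(subrK (G L0) (G (lt i i))); apply: IqD => //; apply: f0.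
Qed.
End Uniq.
Lemma rho_unique f g : is_rho c f -> is_rho c g ->
  forall u, Iq (cl (f u) - cl (g u)).
Proof.
move=> hf hg; elim=> [gen| |u IHu v IHv|k u IHu|u IHu v IHv].
- case: gen => [i|i|i j].
  + by apply: Iq_trans (fx hf i) (Iq_sym (fx hg i)).
  + by apply: Iq_trans (fy hf i) (Iq_sym (fy hg i)).
  + have [<-|hij] := eqVneq i j; first by apply: IqB; [exact: (flt hf i)|exact: (flt hg i)].
    by apply: Iq_trans (ft hf hij) (Iq_sym (ft hg hij)).
- by apply: IqB; [apply: f0 hf|apply: f0 hg].
- apply: Iq_trans (fA hf u v) (Iq_trans _ (Iq_sym (fA hg u v))).
  by rewrite opprD addrACA; apply: IqD.
- apply: Iq_trans (fS hf k u) (Iq_trans _ (Iq_sym (fS hg k u))).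
  by rewrite -scalerBr; apply: IqZ.
- apply: Iq_trans (fB hf u v) (Iq_trans _ (Iq_sym (fB hg u v))).
  by apply: Iq_cm => //; [exact: (fN hg u)|exact: (fN hf v)].
Qed.
End Main.

Theorem mainTheorem10 (F : numClosedFieldType) (d n : nat)
    (c : 'I_d -> 'I_d -> 'I_d -> F) (hc : quadratic_lie c) :
  (exists f : lterm F n -> aterm F d n, is_rho c f) /\
  (forall f g : lterm F n -> aterm F d n, is_rho c f -> is_rho c g ->
     forall u, heq c (f u) (g u)).
Proof.
have h2 : (2 : F) != 0 by rewrite pnatr_eq0.
split; first by exists (fun u => fr d u); apply: rho_exists.
by move=> f g hf hg u; apply/heqE; apply: rho_unique.
Qed.
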